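(* Let $G$ be a fully supported graph, and let $\mathcal{H}$ be the family of graphs $H=(\{v_1,v_2\},\beta)$ with $\beta(v_1,v_2)=\beta(v_2,v_1)=0$ and $\beta(v_1,v_1)>0$, $\beta(v_2,v_2)>0$ (two isolated vertices each with a self-loop of positive weight). The following are equivalent: (1) $G$ is connected; (2) $G$ is strongly disjoint from some $H\in\mathcal{H}$; (3) $G$ is strongly disjoint from every $H\in\mathcal{H}$.
   Context: A weight function on finite $U$ is $\alpha:U\times U\to\mathbb{R}$, $\alpha\ge0$, symmetric, summing to $1$; degree $p(u)=\sum_{u'}\alpha(u,u')$; a graph is $(U,\alpha)$ with edges $(u,u')$ where $\alpha(u,u')>0$; fully supported means $p(u)>0$ for all $u$; connected means any two distinct vertices are joined by a path of edges. For graphs $(U,\alpha)$, $(V,\beta)$ with degrees $p,q$, a weight joining is a weight function $\gamma$ on $U\times V$ with degree $r(u,v)=\sum_{(u',v')}\gamma((u,v),(u',v'))$ such that $\sum_v r(u,v)=p(u)$, $\sum_u r(u,v)=q(v)$, $p(u)\sum_{\tilde v}\gamma((u,v),(u',\tilde v))=\alpha(u,u')r(u,v)$ and $q(v)\sum_{\tilde u}\gamma((u,v),(\tilde u,v'))=\beta(v,v')r(u,v)$ for all $u,u',v,v'$. The graphs are strongly disjoint if the only weight joining is $\alpha\otimes\beta$, $(\alpha\otimes\beta)((u,v),(u',v'))=\alpha(u,u')\beta(v,v')$. *)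

(* Defs.v *)
(* Weights take values in an arbitrary real field R
   (the paper uses the reals; realType instances included). *)
From mathcomp Require Import all_boot all_order all_algebra.
Set Implicit Arguments. Unset Strict Implicit. Unset Printing Implicit Defensive.
Import Order.TTheory GRing.Theory Num.Theory.
Local Open Scope ring_scope.

Section Defs.
Variable R : realFieldType.

Definition weight_fun (U : finType) (a : U -> U -> R) : Prop :=
  (forall u u', 0 <= a u u') /\ (forall u u', a u u' = a u' u) /\
  \sum_(u : U) \sum_(u' : U) a u u' = 1.

Definition deg (U : finType) (a : U -> U -> R) (u : U) : R :=
  \sum_(u' : U) a u u'.

Definition fully_supported (U : finType) (a : U -> U -> R) : Prop :=
  forall u, 0 < deg a u.

Definition edge (U : finType) (a : U -> U -> R) : rel U :=
  fun u u' => 0 < a u u'.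

Definition connected (U : finType) (a : U -> U -> R) : Prop :=
  forall u u' : U, u != u' -> connect (edge a) u u'.

Definition tensor (U V : finType) (a : U -> U -> R) (b : V -> V -> R)
  : (U * V)%type -> (U * V)%type -> R :=
  fun x y => a x.1 y.1 * b x.2 y.2.

Definition weight_joining (U V : finType) (a : U -> U -> R) (b : V -> V -> R)
  (g : (U * V)%type -> (U * V)%type -> R) : Prop :=
  weight_fun g /\
  (forall u, \sum_(v : V) deg g (u, v) = deg a u) /\
  (forall v, \sum_(u : U) deg g (u, v) = deg b v) /\
  (forall u u' v, deg a u * (\sum_(v' : V) g (u, v) (u', v'))
                  = a u u' * deg g (u, v)) /\
  (forall u v v', deg b v * (\sum_(u' : U) g (u, v) (u', v'))
                  = b v v' * deg g (u, v)).

Definition strongly_disjoint (U V : finType) (a : U -> U -> R) (b : V -> V -> R)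
  : Prop :=
  forall g, weight_joining a b g -> g = tensor a b.

Definition in_family_H (b : bool -> bool -> R) : Prop :=
  weight_fun b /\ b true false = 0 /\ b false true = 0 /\
  0 < b true true /\ 0 < b false false.

End Defs.

(* Main.v *)
Require Import Defs.
From mathcomp Require Import all_boot all_order all_algebra.
From mathcomp Require Import ring lra.
From Stdlib Require Import FunctionalExtensionality.
Set Implicit Arguments. Unset Strict Implicit.
Import Order.TTheory GRing.Theory Num.Theory.
Local Open Scope ring_scope.

Lemma sum_pair (R : realFieldType) (U : finType) (F : U * bool -> R) :
  \sum_y F y = \sum_u (F (u, true) + F (u, false)).
Proof.
transitivity (\sum_u \sum_v F (u, v)).
  by rewrite pair_big /=; apply: eq_bigr => -[].
by apply: eq_bigr => u _; rewrite big_bool.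
Qed.

Lemma degb (R : realFieldType) (b : bool -> bool -> R) (Hb : in_family_H b) v :
  deg b v = b v v.
Proof.
case: Hb => _ [h1 [h2 _]]; rewrite /deg big_bool.
by case: v => /=; rewrite ?h1 ?h2 ?addr0 ?add0r.
Qed.

Lemma boff (R : realFieldType) (b : bool -> bool -> R) (Hb : in_family_H b) v v' :
  v != v' -> b v v' = 0.
Proof. by case: Hb => _ [h1 [h2 _]]; case: v; case: v'. Qed.

Lemma bpos (R : realFieldType) (b : bool -> bool -> R) (Hb : in_family_H b) v :
  0 < b v v.
Proof. by case: Hb => _ [h1 [h2 [h3 h4]]]; case: v. Qed.

Lemma bsum (R : realFieldType) (b : bool -> bool -> R) (Hb : in_family_H b) :
  b true true + b false false = 1.
Proof.
case: Hb => [[_ [_ hs]] [h1 [h2 _]]]; move: hs.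
by rewrite !big_bool /= h1 h2 addr0 add0r.
Qed.

Lemma conn_sd (R : realFieldType) (U : finType) (a : U -> U -> R)
  (Ha : weight_fun a) (Hfs : fully_supported a) (Hc : connected a)
  (b : bool -> bool -> R) (Hb : in_family_H b) : strongly_disjoint a b.
Proof.
move=> g [[g0 [gs g1]] [Hi [Hii [Hiii Hiv]]]].
have pu0 u : deg a u != 0 by apply: lt0r_neq0.
have sump : \sum_u deg a u = 1 by case: Ha => _ [].
have asym u u' : a u u' = a u' u by case: Ha => _ [].
have off u u' v v' : v != v' -> g (u,v) (u',v') = 0.
  move=> hvv; have := Hiv u v v'; rewrite (boff Hb hvv) mul0r => /eqP.
  rewrite mulf_eq0 degb // (negbTE (lt0r_neq0 (bpos Hb v))) /= => /eqP H.
  by apply: (psumr_eq0P (fun i _ => g0 _ _) H).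
have diag u u' v : deg a u * g (u,v) (u',v) = a u u' * deg g (u,v).
  rewrite -Hiii big_bool; case: v => /=.
    by rewrite (off _ _ true false) // addr0.
  by rewrite (off _ _ false true) // add0r.
pose f v u := deg g (u,v) / deg a u.
have gf u u' v : g (u,v) (u',v) = a u u' * f v u.
  apply: (mulfI (pu0 u)); rewrite diag /f mulrCA [deg a u * _]mulrC divfK //.
have edge_eq u u' v : 0 < a u u' -> f v u = f v u'.
  move=> h; apply: (mulfI (lt0r_neq0 h)); rewrite -gf gs gf asym //.
have conn_eq v x y : connect (edge a) x y -> f v x = f v y.
  move/connectP => [p pth ->]; elim: p x pth => [|z p IH] x //= /andP [exz pth].
  by rewrite (edge_eq _ _ _ exz) IH.
have cst v u u' : f v u = f v u'.
  by case: (eqVneq u u') => [->|ne] //; apply: conn_eq; apply: Hc.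
have fq v u : f v u = deg b v.
  rewrite -Hii.
  have e u' : deg g (u',v) = f v u * deg a u'.
    by rewrite (cst v u u') /f divfK.
  by rewrite (eq_bigr _ (fun u' _ => e u')) -mulr_sumr sump mulr1.
apply: functional_extensionality => -[u v]; apply: functional_extensionality => -[u' v'].
rewrite /tensor /=; case: (eqVneq v v') => [<-|ne].
  by rewrite gf fq degb.
by rewrite off // boff // mulr0.
Qed.
Lemma notconn (R : realFieldType) (U : finType) (a : U -> U -> R)
  (Ha : weight_fun a) (Hfs : fully_supported a)
  (b : bool -> bool -> R) (Hb : in_family_H b) (u0 u1 : U) :
  ~~ connect (edge a) u0 u1 -> ~ strongly_disjoint a b.
Proof.
move=> nc Hsd.
have sump : \sum_u deg a u = 1 by case: Ha => _ [].
have asym u u' : a u u' = a u' u by case: Ha => _ [].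
have a0 u u' : 0 <= a u u' by case: Ha.
pose C u := connect (edge a) u0 u.
pose s := \sum_u deg a u * (C u)%:R.
pose b1 := b true true. pose b2 := b false false.
have hb1 : 0 < b1 := bpos Hb true.
have hb2 : 0 < b2 := bpos Hb false.
have hb12 : b1 + b2 = 1 := bsum Hb.
pose e := b1 * b2.
pose fT u := b1 + e * ((C u)%:R - s).
pose f (v : bool) u := if v then fT u else 1 - fT u.
pose g (x y : U * bool) := if x.2 == y.2 then a x.1 y.1 * f x.2 x.1 else 0.
have Cr u : (C u)%:R = 0 :> R \/ (C u)%:R = 1 :> R by case: (C u); [right|left].
have hs0 : 0 <= s.
  by apply: sumr_ge0 => u _; apply: mulr_ge0; [apply: ltW; apply: Hfs | apply: ler0n].
have hs1 : s < 1.
  have E : \sum_u deg a u - s = \sum_u deg a u * (1 - (C u)%:R).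
    by rewrite /s -sumrB; apply: eq_bigr => u _; ring.
  rewrite sump in E.
  have : 0 < 1 - s.
    rewrite E (bigD1 u1) //= /C (negbTE nc) subr0 mulr1.
    apply: ltr_pwDl; first by apply: Hfs.
    apply: sumr_ge0 => u _; apply: mulr_ge0; first by apply: ltW; apply: Hfs.
    by case: (Cr u) => ->; rewrite ?subrr ?subr0 ?ler01.
  lra.
have he : 0 < e by apply: mulr_gt0.
have he1 : e <= b1 by rewrite /e; nra.
have he2 : e <= b2 by rewrite /e; nra.
have hfT u : 0 <= fT u <= 1.
  rewrite /fT; case: (Cr u) => ->; apply/andP; split; nra.
have hf v u : 0 <= f v u.
  case: v; rewrite /f; case/andP: (hfT u) => h1 h2; lra.
have Ceq u u' : 0 < a u u' -> C u = C u'.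
  move=> h; apply/idP/idP => H.
    by apply: (connect_trans H); apply: connect1.
  apply: (connect_trans H); apply: connect1; by rewrite /edge asym.
have sym u u' v : a u u' * f v u = a u' u * f v u'.
  rewrite -(asym u u'); have := a0 u u'; rewrite le_eqVlt => /orP [/eqP <-|h].
    by rewrite !mul0r.
  by rewrite /f /fT (Ceq _ _ h).
have hdeg u v : deg g (u,v) = deg a u * f v u.
  rewrite /deg sum_pair mulr_suml; apply: eq_bigr => u' _.
  by rewrite /g /=; case: v => /=; rewrite ?addr0 ?add0r.
have J : weight_joining a b g.
  split; [split; [|split]|split; [|split; [|split]]].
  - move=> [u v] [u' v']; rewrite /g /=; case: eqP => _ //.
    by apply: mulr_ge0.
  - move=> [u v] [u' v']; rewrite /g; cbn [fst snd]; case: (eqVneq v v') => [<-|ne].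
      exact: sym.
    by [].
  - rewrite -sump; have -> : \sum_x \sum_y g x y = \sum_x deg g x by [].
    rewrite sum_pair; apply: eq_bigr => u _; rewrite !hdeg /f /=; ring.
  - by move=> u; rewrite big_bool !hdeg /f /=; ring.
  - move=> v; rewrite degb //.
    under eq_bigr do rewrite hdeg.
    case: v => /=.
      rewrite (eq_bigr (fun u => (b1 - e * s) * deg a u + e * (deg a u * (C u)%:R))); last first.
        by move=> u _; rewrite /f /fT; move: ((C u)%:R) (deg a u) => c d; apply/eqP; rewrite -subr_eq0; apply/eqP; ring.
      rewrite big_split /= -!mulr_sumr sump -/s mulr1 subrK.
      by [].
    rewrite (eq_bigr (fun u => (1 - b1 + e * s) * deg a u - e * (deg a u * (C u)%:R))); last first.
      by move=> u _; rewrite /f /fT; move: ((C u)%:R) (deg a u) => c d; apply/eqP; rewrite -subr_eq0; apply/eqP; ring.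
    rewrite sumrB -!mulr_sumr sump -/s -/b2; lra.
  - move=> u u' v; rewrite big_bool hdeg /g /=; case: v => /=; ring.
  - move=> u v v'; rewrite hdeg degb //; case: (eqVneq v v') => [<-|ne].
      rewrite /g /= eqxx -mulr_suml; rewrite /deg; ring.
    rewrite /g /= big1; last by move=> u' _; rewrite (negbTE ne).
    by rewrite mulr0 (boff Hb ne) mul0r.
have E := Hsd g J.
have E2 : \sum_w g (u0,true) (w,true) = \sum_w tensor a b (u0,true) (w,true) by rewrite E.
move: E2; rewrite /g /tensor /= -!mulr_suml -/(deg a u0) => E2.
have E3 : fT u0 = b1 by apply: (mulfI (lt0r_neq0 (Hfs u0))).
move: E3; rewrite /fT /C connect0 /=.
have : 0 < e * (1 - s) by apply: mulr_gt0; lra.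
lra.
Qed.

Lemma conn_dec (R : realFieldType) (U : finType) (a : U -> U -> R) :
  connected a \/ exists u0 u1, ~~ connect (edge a) u0 u1.
Proof.
case: (boolP [forall u, forall u', (u != u') ==> connect (edge a) u u']) => H.
  left => u u' ne; move/forallP: H => /(_ u) /forallP /(_ u') /implyP; exact.
right; move/forallPn: H => [u /forallPn [u']]; rewrite negb_imply => /andP [_ nc].
by exists u, u'.
Qed.

Lemma H_ne (R : realFieldType) : exists b : bool -> bool -> R, in_family_H b.
Proof.
exists (fun x y => if x == y then 1/2 else 0).
split; [split; [|split]|].
- by move=> x y; case: (x == y) => //; rewrite divr_ge0 ?ler0n.
- by move=> x y; rewrite eq_sym.
- rewrite !big_bool /=; lra.
- split; [by []|split; [by []|]]; rewrite /=; split; lra.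
Qed.

Theorem proposition7p2 (R : realFieldType) (U : finType) (a : U -> U -> R)
  (Ha : weight_fun a) (Hfs : fully_supported a) :
  (connected a <-> exists b : bool -> bool -> R,
                     in_family_H b /\ strongly_disjoint a b) /\
  (connected a <-> forall b : bool -> bool -> R,
                     in_family_H b -> strongly_disjoint a b).
Proof.
have ex_conn : (exists b : bool -> bool -> R, in_family_H b /\ strongly_disjoint a b) -> connected a.
  move=> [b [Hb Hsd]]; case: (conn_dec a) => // [[u0 [u1 nc]]].
  by case: (notconn Ha Hfs Hb nc Hsd).
have [b0 Hb0] := H_ne R.
split; split.
- by move=> Hc; exists b0; split => //; apply: conn_sd.
- exact: ex_conn.
- by move=> Hc b Hb; apply: conn_sd.
- by move=> H; apply: ex_conn; exists b0; split => //; apply: H.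
Qed.
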